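(* Let $X\subseteq\mathbb{R}^n$ be compact, let $U_1,U_2\subseteq\mathbb{R}^m$ be compact, let $F:X\times(U_1\cup U_2)\to X$ be continuous, let $R:X\to[0,1]$ be Lipschitz with constant $L_R$, and let $\gamma\in[0,1)$. For $i=1,2$ define the Bellman operator on bounded functions $V:X\to\mathbb{R}$ by $$(\mathcal{T}_iV)(\mathbf{x})=\max_{\mathbf{u}\in U_i}\big[R(F(\mathbf{x},\mathbf{u}))+\gamma V(F(\mathbf{x},\mathbf{u}))\big],$$ and let $V_i^*$ be its unique bounded fixed point (the optimal value function of the discounted problem with action set $U_i$). Suppose $V_1^*$ and $V_2^*$ are Lipschitz with a common Lipschitz constant $L_V$. Then $$\|V_1^*-V_2^*\|_\infty\le\frac{L_R+\gamma L_V}{1-\gamma}\,\max_{\mathbf{x}\in X} d_S\big(\mathcal{R}_F(\mathbf{x},U_1),\mathcal{R}_F(\mathbf{x},U_2)\big).$$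
   Context: The reachable set of $F$ from $\mathbf{x}$ under an action set $U$ is $\mathcal{R}_F(\mathbf{x},U)=\{F(\mathbf{x},\mathbf{u}):\mathbf{u}\in U\}$. For $a\in\mathbb{R}^n$ and $M\subseteq\mathbb{R}^n$, $d(a,M)=\inf_{m\in M}\|a-m\|$; the Hausdorff distance between $M,N\subseteq\mathbb{R}^n$ is $d_S(M,N)=\max\{\sup_{m\in M}d(m,N),\ \sup_{n\in N}d(n,M)\}$. Norms are Euclidean. *)

(* Defs.v *)
From HB Require Import structures.
From mathcomp Require Import all_boot all_order all_algebra.
From mathcomp Require Import all_classical all_reals all_analysis.
Set Implicit Arguments. Unset Strict Implicit. Unset Printing Implicit Defensive.
Import Order.TTheory GRing.Theory Num.Theory numFieldNormedType.Exports.
Local Open Scope classical_set_scope.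
Local Open Scope ring_scope.

Definition enorm (R : realType) (k : nat) (v : 'rV[R]_k) : R :=
  Num.sqrt (\sum_(i < k) (v ord0 i) ^+ 2).

Definition reach (R : realType) (n m : nat)
  (F : 'rV[R]_n -> 'rV[R]_m -> 'rV[R]_n) (x : 'rV[R]_n) (U : set 'rV[R]_m)
  : set 'rV[R]_n := [set F x u | u in U].

Definition pt_dist (R : realType) (n : nat) (a : 'rV[R]_n) (M : set 'rV[R]_n) : R :=
  inf [set enorm (a - y) | y in M].

Definition hausdorff (R : realType) (n : nat) (M N : set 'rV[R]_n) : R :=
  Num.max (sup [set pt_dist y N | y in M]) (sup [set pt_dist y M | y in N]).

Definition elipschitz_on (R : realType) (n : nat) (X : set 'rV[R]_n)
  (f : 'rV[R]_n -> R) (L : R) : Prop :=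
  forall x y, X x -> X y -> `|f x - f y| <= L * enorm (x - y).

Definition vbounded_on (R : realType) (n : nat) (X : set 'rV[R]_n)
  (V : 'rV[R]_n -> R) : Prop :=
  exists M : R, forall x, X x -> `|V x| <= M.

Definition bellman_fixed (R : realType) (n m : nat) (X : set 'rV[R]_n)
  (U : set 'rV[R]_m) (F : 'rV[R]_n -> 'rV[R]_m -> 'rV[R]_n)
  (Rw : 'rV[R]_n -> R) (gamma : R) (V : 'rV[R]_n -> R) : Prop :=
  forall x, X x ->
    (exists2 u, U u & V x = Rw (F x u) + gamma * V (F x u)) /\
    (forall u, U u -> Rw (F x u) + gamma * V (F x u) <= V x).

(* Main.v *)
Require Import Defs.
From HB Require Import structures.
From mathcomp Require Import all_boot all_order all_algebra.
From mathcomp Require Import all_classical all_reals all_analysis.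
From mathcomp Require Import lra.

Import Order.TTheory GRing.Theory Num.Theory numFieldNormedType.Exports.
Local Open Scope classical_set_scope.
Local Open Scope ring_scope.

Lemma entry_le (R : realType) k (v : 'rV[R]_k) i : `|v ord0 i| <= `|v|.
Proof.
have -> : `|v| = mx_norm v by [].
rewrite mx_normrE.
exact: (le_bigmax _ (fun ij : 'I_1 * 'I_k => `|v ij.1 ij.2|) (ord0, i)).
Qed.

Lemma enorm_bound (R : realType) k (v : 'rV[R]_k) B : `|v| <= B ->
  enorm v <= Num.sqrt (k%:R * B ^+ 2).
Proof.
move=> hB; rewrite /enorm ler_sqrt; last first.
  by rewrite mulr_ge0 // exprn_ge0 // (le_trans (normr_ge0 _) hB).
have -> : k%:R * B ^+ 2 = \sum_(i < k) B ^+ 2 by rewrite sumr_const card_ord mulr_natl.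
apply: ler_sum => i _.
rewrite -real_normK ?num_real //; apply: lerXn2r; rewrite ?nnegrE //.
  exact: le_trans (normr_ge0 _) hB.
exact: le_trans (@entry_le _ _ v i) hB.
Qed.

Lemma bnd (R : realType) n (X : set 'rV[R]_n) : compact X ->
  exists B, forall x, X x -> `|x| <= B.
Proof.
move=> /compact_bounded /= [M [_ HM]]; exists (M+1) => x Xx.
by apply: (HM (M+1)) => //; lra.
Qed.

Arguments bnd {R n X}.
Arguments enorm_bound {R k v B}.

Lemma ptd_le (R : realType) n (y z : 'rV[R]_n) (N : set 'rV[R]_n) :
  N z -> pt_dist y N <= enorm (y - z).
Proof.
move=> Nz; rewrite /pt_dist.
have : has_lbound [set enorm (y - w) | w in N].
  by exists 0 => _ [w _ <-]; exact: sqrtr_ge0.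
by move/ge_inf; apply; exists z.
Qed.

Arguments ptd_le {R n} y {z N}.

Lemma ptd_ge0 (R : realType) n (y : 'rV[R]_n) (N : set 'rV[R]_n) :
  N !=set0 -> 0 <= pt_dist y N.
Proof.
move=> [z Nz]; apply: lb_le_inf; first by exists (enorm (y - z)), z.
by move=> _ [w _ <-]; exact: sqrtr_ge0.
Qed.

Arguments ptd_ge0 {R n} y {N}.

Lemma key (R : realType) n m (X : set 'rV[R]_n) (Ub : set 'rV[R]_m)
  (F : 'rV[R]_n -> 'rV[R]_m -> 'rV[R]_n) (Rw Va Vb : 'rV[R]_n -> R)
  (LR LV g d D e : R) x y1 :
  X y1 -> Va x = Rw y1 + g * Va y1 ->
  (forall u, Ub u -> X (F x u)) ->
  (forall u, Ub u -> Rw (F x u) + g * Vb (F x u) <= Vb x) ->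
  elipschitz_on X Rw LR -> elipschitz_on X Va LV ->
  0 <= g -> 0 <= LR -> 0 <= LV -> Ub !=set0 ->
  pt_dist y1 (reach F x Ub) <= d ->
  (forall z, X z -> `|Va z - Vb z| <= D) -> 0 < e ->
  Va x - Vb x <= (LR + g * LV) * (d + e) + g * D.
Proof.
move=> Xy1 Vax FXb Bb LipR LipA g0 LR0 LV0 [u0 Ub0] hd hD e0.
have : inf [set enorm (y1 - w) | w in reach F x Ub] < d + e.
  by apply: le_lt_trans hd _; rewrite /pt_dist ltrDl.
case/inf_lt; first by exists (enorm (y1 - F x u0)), (F x u0) => //; exists u0.
move=> _ [_ [u Ubu <-] <-] ht.
set z := F x u in ht *.
have Xz : X z by exact: FXb.
set t := enorm (y1 - z) in ht.
have h1 : Rw y1 - Rw z <= LR * t by exact: le_trans (ler_norm _) (LipR _ _ Xy1 Xz).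
have h2 : Va y1 - Va z <= LV * t by exact: le_trans (ler_norm _) (LipA _ _ Xy1 Xz).
have h3 : Va z - Vb z <= D by exact: le_trans (ler_norm _) (hD _ Xz).
have h4 := Bb _ Ubu.
have g2 : g * (Va y1 - Va z) <= g * (LV * t) by exact: ler_wpM2l.
have g3 : g * (Va z - Vb z) <= g * D by exact: ler_wpM2l.
have g5 : (LR + g * LV) * t <= (LR + g * LV) * (d + e).
  by apply: ler_wpM2l; [rewrite addr_ge0 // mulr_ge0 | exact: ltW].
rewrite Vax; rewrite -/z in h4.
have E : (LR + g * LV) * t = LR * t + g * (LV * t) by rewrite mulrDl mulrA.
rewrite E in g5.
lra.
Qed.

Arguments key {R n m X Ub F Rw Va Vb LR LV g d D e x y1}.

Theorem lemma1 (R : realType) (n m : nat)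
  (X : set 'rV[R]_n) (U1 U2 : set 'rV[R]_m)
  (F : 'rV[R]_n -> 'rV[R]_m -> 'rV[R]_n) (Rw : 'rV[R]_n -> R)
  (L_R L_V gamma : R) (V1 V2 : 'rV[R]_n -> R) :
  compact X -> X !=set0 ->
  compact U1 -> compact U2 -> U1 !=set0 -> U2 !=set0 ->
  {within X `*` (U1 `|` U2), continuous (fun p => F p.1 p.2)} ->
  (forall x u, X x -> (U1 `|` U2) u -> X (F x u)) ->
  (forall x, X x -> 0 <= Rw x <= 1) ->
  0 <= L_R -> elipschitz_on X Rw L_R ->
  0 <= gamma < 1 ->
  vbounded_on X V1 -> bellman_fixed X U1 F Rw gamma V1 ->
  vbounded_on X V2 -> bellman_fixed X U2 F Rw gamma V2 ->
  0 <= L_V -> elipschitz_on X V1 L_V -> elipschitz_on X V2 L_V ->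
  sup [set `|V1 x - V2 x| | x in X] <=
    (L_R + gamma * L_V) / (1 - gamma) *
    sup [set hausdorff (reach F x U1) (reach F x U2) | x in X].
Proof.
move=> cX [x0 X0] _ _ U1n U2n _ FX _ LR0 LipR /andP[g0 g1] [M1 HM1] B1
  [M2 HM2] B2 LV0 Lip1 Lip2.
have [B HB] := bnd cX.
set E := Num.sqrt (n%:R * (B + B) ^+ 2).
have dXX : forall y z, X y -> X z -> enorm (y - z) <= E.
  move=> y z Xy Xz; apply: enorm_bound.
  by apply: le_trans (ler_normB _ _) _; apply: lerD; apply: HB.
have r1 : forall x, X x -> reach F x U1 `<=` X.
  by move=> x Xx _ [u Uu <-]; apply: FX => //; left.
have r2 : forall x, X x -> reach F x U2 `<=` X.
  by move=> x Xx _ [u Uu <-]; apply: FX => //; right.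
have rn : forall x (U : set 'rV[R]_m), U !=set0 -> reach F x U !=set0.
  by move=> x U [u Uu]; exists (F x u), u.
have side : forall (M N : set 'rV[R]_n), M `<=` X -> N `<=` X ->
    M !=set0 -> N !=set0 ->
    has_sup [set pt_dist y N | y in M] /\ sup [set pt_dist y N | y in M] <= E.
  move=> M N MX NX [y My] [z Nz].
  have ub : ubound [set pt_dist y N | y in M] E.
    move=> _ [w Mw <-]; apply: le_trans (ptd_le w Nz) _.
    by apply: dXX; [apply: MX | apply: NX].
  split; first by split; [exists (pt_dist y N), y | exists E].
  by apply: ge_sup => //; exists (pt_dist y N), y.
have hsup : has_sup [set hausdorff (reach F x U1) (reach F x U2) | x in X].
  split; first by exists (hausdorff (reach F x0 U1) (reach F x0 U2)), x0.
  exists E => _ [x Xx <-]; rewrite /hausdorff ge_max.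
  by rewrite (side _ _ (r1 _ Xx) (r2 _ Xx) (rn _ _ U1n) (rn _ _ U2n)).2
             (side _ _ (r2 _ Xx) (r1 _ Xx) (rn _ _ U2n) (rn _ _ U1n)).2.
set H := sup [set hausdorff (reach F x U1) (reach F x U2) | x in X].
have hH : forall x, X x -> hausdorff (reach F x U1) (reach F x U2) <= H.
  by move=> x Xx; apply: (sup_upper_bound hsup); exists x.
have hDs : has_sup [set `|V1 x - V2 x| | x in X].
  split; first by exists (`|V1 x0 - V2 x0|), x0.
  exists (M1 + M2) => _ [x Xx <-].
  by apply: le_trans (ler_normB _ _) _; apply: lerD; [apply: HM1 | apply: HM2].
set D := sup [set `|V1 x - V2 x| | x in X].
have hD : forall z, X z -> `|V1 z - V2 z| <= D.
  by move=> z Xz; apply: sup_upper_bound => //; exists z.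
have hD' : forall z, X z -> `|V2 z - V1 z| <= D.
  by move=> z Xz; rewrite distrC; apply: hD.
set K := L_R + gamma * L_V.
have K0 : 0 <= K by rewrite addr_ge0 // mulr_ge0.
have H0 : 0 <= H.
  apply: le_trans (hH _ X0); rewrite /hausdorff le_max; apply/orP; left.
  have [y1 Ry1] := rn x0 _ U1n.
  apply: le_trans (ptd_ge0 y1 (rn x0 _ U2n)) _.
  apply: sup_upper_bound; first exact: (side _ _ (r1 _ X0) (r2 _ X0) (rn _ _ U1n) (rn _ _ U2n)).1.
  by exists y1.
have bound : forall x, X x -> `|V1 x - V2 x| <= K * H + gamma * D.
  move=> x Xx; have [[ua Ua Va] _] := B1 x Xx; have [[ub Ub Vb] _] := B2 x Xx.
  have [_ Ba] := B1 x Xx; have [_ Bb] := B2 x Xx.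
  rewrite ler_norml; apply/andP; split.
  - rewrite lerNl opprB; apply/ler_addgt0Pr => e e0.
    have e1 : 0 < e / (K + 1) by rewrite divr_gt0 // ltr_wpDl.
    have Hd : pt_dist (F x ub) (reach F x U1) <= H.
      apply: le_trans (hH _ Xx); rewrite /hausdorff le_max; apply/orP; right.
      apply: sup_upper_bound; last by exists (F x ub) => //; exists ub.
      exact: (side _ _ (r2 _ Xx) (r1 _ Xx) (rn _ _ U2n) (rn _ _ U1n)).1.
    have h := key (Ub:=U1) (FX x ub Xx (or_intror Ub)) Vb
      (fun u Uu => FX x u Xx (or_introl Uu)) Ba LipR Lip2 g0 LR0 LV0 U1n Hd hD' e1.
    have : K * (e / (K + 1)) <= e.
      rewrite mulrA ler_pdivrMr ?ltr_wpDl //; nra.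
    rewrite /K in h *; nra.
  - apply/ler_addgt0Pr => e e0.
    have e1 : 0 < e / (K + 1) by rewrite divr_gt0 // ltr_wpDl.
    have Hd : pt_dist (F x ua) (reach F x U2) <= H.
      apply: le_trans (hH _ Xx); rewrite /hausdorff le_max; apply/orP; left.
      apply: sup_upper_bound; last by exists (F x ua) => //; exists ua.
      exact: (side _ _ (r1 _ Xx) (r2 _ Xx) (rn _ _ U1n) (rn _ _ U2n)).1.
    have h := key (Ub:=U2) (FX x ua Xx (or_introl Ua)) Va
      (fun u Uu => FX x u Xx (or_intror Uu)) Bb LipR Lip1 g0 LR0 LV0 U2n Hd hD e1.
    have : K * (e / (K + 1)) <= e.
      rewrite mulrA ler_pdivrMr ?ltr_wpDl //; nra.
    rewrite /K in h *; nra.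
have DD : D <= K * H + gamma * D.
  by apply: ge_sup; [exists (`|V1 x0 - V2 x0|), x0 | move=> _ [x Xx <-]; apply: bound].
rewrite mulrAC ler_pdivlMr; last by rewrite subr_gt0.
nra.
Qed.
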